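(* Let $\lambda_1,\lambda_2,\lambda_3>0$ satisfy $3\lambda_i^2+\lambda_i(\lambda_j+\lambda_k)-\lambda_j\lambda_k>0$ for each $i$ (with $\{i,j,k\}=\{1,2,3\}$), and let $F_1=F_2=F_3=0$. Then, with $\sigma_i,w_i$ given by the 3D $B_2$ formulas, $0<\sigma_i<w_i$ for $i=1,2,3$; hence $\gamma_i=\frac12$ and $\delta_i=\sigma_i/(w_i-\sigma_i)>0$ are well defined and the ansatz $\hat I(\Omega)=\sum_{i=1}^3\frac{1}{2\pi}w_i\mathcal{F}(\Omega\cdot R_i;\gamma_i,\delta_i)$ is a non-negative function for any orthonormal $R_1,R_2,R_3$.
   Context: For $x,y>0$, $g(x,y;a,b)=\dfrac{2(x-a^2/x)(y-b^2/y)(x-a^2/x+y-b^2/y)}{3(x+y)^2}$; for $\{i,j,k\}=\{1,2,3\}$, $\sigma_i=\lambda_i-g(\lambda_i,\lambda_j;F_i,F_j)-g(\lambda_i,\lambda_k;F_i,F_k)$, $w_i=\sigma_i+2g(\lambda_j,\lambda_k;F_j,F_k)$, $\gamma_i=\frac{F_i+w_i}{2w_i}$, $\delta_i=\frac{\sigma_iw_i-F_i^2}{w_i^2-\sigma_iw_i}$. For $\gamma\in(0,1),\delta>0$, with $\xi=\gamma/\delta$, $\eta=(1-\gamma)/\delta$, $\mathcal{F}(\mu;\gamma,\delta)=\frac{1}{2\mathrm{B}(\xi,\eta)}\left(\frac{1+\mu}{2}\right)^{\xi-1}\left(\frac{1-\mu}{2}\right)^{\eta-1}$ on $[-1,1]$.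 *)

(* Defs.v *)
From Stdlib Require Import Reals Lra ClassicalEpsilon.
Open Scope R_scope.

Definition g (x y a b : R) : R :=
  2 * (x - a^2 / x) * (y - b^2 / y) * (x - a^2 / x + y - b^2 / y)
  / (3 * (x + y)^2).

(* sigma_i, w_i, gamma_i, delta_i with (li,lj,lk) = (lambda_i,lambda_j,lambda_k),
   (Fi,Fj,Fk) likewise. *)
Definition sigmaB (li lj lk Fi Fj Fk : R) : R :=
  li - g li lj Fi Fj - g li lk Fi Fk.
Definition wB (li lj lk Fi Fj Fk : R) : R :=
  sigmaB li lj lk Fi Fj Fk + 2 * g lj lk Fj Fk.
Definition gam (li lj lk Fi Fj Fk : R) : R :=
  let wi := wB li lj lk Fi Fj Fk in (Fi + wi) / (2 * wi).
Definition del (li lj lk Fi Fj Fk : R) : R :=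
  let si := sigmaB li lj lk Fi Fj Fk in
  let wi := wB li lj lk Fi Fj Fk in
  (si * wi - Fi^2) / (wi^2 - si * wi).

(* Riemann integral over [a,b] when it exists (0 otherwise). *)
Definition RInt (f : R -> R) (a b : R) : R :=
  match excluded_middle_informative (exists pr : Riemann_integrable f a b, True) with
  | left H => RiemannInt (proj1_sig (constructive_indefinite_description _ H))
  | right _ => 0
  end.

(* Improper integral over (0,1): limit of integrals over [1/(n+2), 1 - 1/(n+2)]
   (0 if the limit does not exist). *)
Definition improper01 (f : R -> R) : R :=
  let u := fun n : nat => RInt f (/ INR (n + 2)) (1 - / INR (n + 2)) in
  match excluded_middle_informative (exists l, Un_cv u l) with
  | left H => proj1_sig (constructive_indefinite_description _ H)
  | right _ => 0
  end.

Definition Beta (xi eta : R) : R :=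
  improper01 (fun t => Rpower t (xi - 1) * Rpower (1 - t) (eta - 1)).

Definition Fdist (mu gamma delta : R) : R :=
  let xi := gamma / delta in
  let eta := (1 - gamma) / delta in
  / (2 * Beta xi eta) * Rpower ((1 + mu) / 2) (xi - 1)
                       * Rpower ((1 - mu) / 2) (eta - 1).

Definition vec3 : Type := (R * R * R)%type.
Definition dot (u v : vec3) : R :=
  let '(u1, u2, u3) := u in let '(v1, v2, v3) := v in u1*v1 + u2*v2 + u3*v3.

Definition orthonormal3 (R1 R2 R3 : vec3) : Prop :=
  dot R1 R1 = 1 /\ dot R2 R2 = 1 /\ dot R3 R3 = 1 /\
  dot R1 R2 = 0 /\ dot R1 R3 = 0 /\ dot R2 R3 = 0.

Definition Ihat (l1 l2 l3 F1 F2 F3 : R) (R1 R2 R3 : vec3) (Om : vec3) : R :=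
  / (2 * PI) * wB l1 l2 l3 F1 F2 F3
     * Fdist (dot Om R1) (gam l1 l2 l3 F1 F2 F3) (del l1 l2 l3 F1 F2 F3)
  + / (2 * PI) * wB l2 l1 l3 F2 F1 F3
     * Fdist (dot Om R2) (gam l2 l1 l3 F2 F1 F3) (del l2 l1 l3 F2 F1 F3)
  + / (2 * PI) * wB l3 l1 l2 F3 F1 F2
     * Fdist (dot Om R3) (gam l3 l1 l2 F3 F1 F2) (del l3 l1 l2 F3 F1 F2).

(* Main.v *)
Require Import Defs.
From Stdlib Require Import Reals Lra Psatz ClassicalEpsilon.
Open Scope R_scope.

Lemma g0 x y : 0 < x -> 0 < y -> g x y 0 0 = 2*x*y/(3*(x+y)).
Proof. intros; unfold g; field; lra. Qed.

Lemma key a b c : 0<a -> 0<b -> 0<c -> 3*a^2 + a*(b+c) - b*c > 0 ->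
  (0 < sigmaB a b c 0 0 0 < wB a b c 0 0 0) /\
  gam a b c 0 0 0 = 1/2 /\
  (del a b c 0 0 0 = sigmaB a b c 0 0 0 / (wB a b c 0 0 0 - sigmaB a b c 0 0 0)
   /\ 0 < del a b c 0 0 0) /\ 0 < wB a b c 0 0 0.
Proof.
  intros ha hb hc hk.
  assert (Hs : sigmaB a b c 0 0 0 = a*(3*a^2 + a*(b+c) - b*c)/(3*(a+b)*(a+c))).
  { unfold sigmaB; rewrite !g0 by lra; field; lra. }
  assert (Hd : wB a b c 0 0 0 - sigmaB a b c 0 0 0 = 2*(2*b*c/(3*(b+c)))).
  { unfold wB; rewrite (g0 b c) by lra; ring. }
  assert (Sp : 0 < sigmaB a b c 0 0 0).
  { rewrite Hs; apply Rdiv_lt_0_compat; [apply Rmult_lt_0_compat; lra| nra]. }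
  assert (Dp : 0 < wB a b c 0 0 0 - sigmaB a b c 0 0 0).
  { rewrite Hd; assert (0 < 2*b*c/(3*(b+c))) by (apply Rdiv_lt_0_compat; nra). lra. }
  set (s := sigmaB a b c 0 0 0) in *. set (w := wB a b c 0 0 0) in *.
  assert (Wp : 0 < w) by lra.
  split; [lra|]. split.
  { unfold gam; cbv zeta; fold w; field; lra. }
  split; [|lra].
  assert (E : del a b c 0 0 0 = s / (w - s)).
  { unfold del; cbv zeta; fold s w; replace (w^2 - s*w) with (w*(w-s)) by ring; field; lra. }
  split; [exact E|]. rewrite E; apply Rdiv_lt_0_compat; lra.
Qed.

Lemma RInt_nonneg f a b : a <= b -> (forall x, 0 <= f x) -> 0 <= RInt f a b.
Proof.
  intros hab hf; unfold RInt.
  destruct excluded_middle_informative as [H|H]; [|lra].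
  pose proof (RiemannInt_P19 (RiemannInt_P14 a b 0) (proj1_sig (constructive_indefinite_description _ H)) hab) as HH.
  rewrite RiemannInt_P15 in HH. assert (0 * (b - a) = 0) by ring.
  rewrite H0 in HH. apply HH. intros; unfold fct_cte; apply hf.
Qed.

Lemma Beta_nonneg x y : 0 <= Beta x y.
Proof.
  unfold Beta, improper01.
  destruct excluded_middle_informative as [H|H]; [|lra].
  destruct (constructive_indefinite_description _ H) as [l Hl]; simpl.
  eapply (@Rle_cv_lim (fun _ => 0) _ 0 l); [| intros e he; exists 0%nat; intros;
    unfold Rdist; rewrite Rminus_diag, Rabs_R0; lra | exact Hl].
  intros n. apply RInt_nonneg.
  - assert (0 < INR (n+2)) by (apply lt_0_INR; lia).
    assert (2 <= INR (n+2)) by (rewrite plus_INR; simpl; pose proof (pos_INR n); lra).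
    assert (/ INR (n+2) <= /2) by (apply Rinv_le_contravar; lra). lra.
  - intros t; unfold Rpower; apply Rmult_le_pos; left; apply exp_pos.
Qed.

Lemma Fdist_nonneg m a b : 0 <= Fdist m a b.
Proof.
  unfold Fdist. pose proof (Beta_nonneg (a/b) ((1-a)/b)).
  apply Rmult_le_pos; [apply Rmult_le_pos|]; unfold Rpower; try (left; apply exp_pos).
  destruct (Req_dec (Beta (a/b) ((1-a)/b)) 0) as [E|E].
  - rewrite E, Rmult_0_r, Rinv_0; lra.
  - left; apply Rinv_0_lt_compat; lra.
Qed.

Theorem mainTheorem10 (l1 l2 l3 : R)
  (h1 : 0 < l1) (h2 : 0 < l2) (h3 : 0 < l3)
  (c1 : 3 * l1^2 + l1 * (l2 + l3) - l2 * l3 > 0)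
  (c2 : 3 * l2^2 + l2 * (l1 + l3) - l1 * l3 > 0)
  (c3 : 3 * l3^2 + l3 * (l1 + l2) - l1 * l2 > 0) :
  let F1 := 0 in let F2 := 0 in let F3 := 0 in
  (0 < sigmaB l1 l2 l3 F1 F2 F3 < wB l1 l2 l3 F1 F2 F3 /\
   0 < sigmaB l2 l1 l3 F2 F1 F3 < wB l2 l1 l3 F2 F1 F3 /\
   0 < sigmaB l3 l1 l2 F3 F1 F2 < wB l3 l1 l2 F3 F1 F2) /\
  (gam l1 l2 l3 F1 F2 F3 = 1/2 /\ gam l2 l1 l3 F2 F1 F3 = 1/2 /\
   gam l3 l1 l2 F3 F1 F2 = 1/2) /\
  (del l1 l2 l3 F1 F2 F3
     = sigmaB l1 l2 l3 F1 F2 F3 / (wB l1 l2 l3 F1 F2 F3 - sigmaB l1 l2 l3 F1 F2 F3)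
   /\ 0 < del l1 l2 l3 F1 F2 F3) /\
  (del l2 l1 l3 F2 F1 F3
     = sigmaB l2 l1 l3 F2 F1 F3 / (wB l2 l1 l3 F2 F1 F3 - sigmaB l2 l1 l3 F2 F1 F3)
   /\ 0 < del l2 l1 l3 F2 F1 F3) /\
  (del l3 l1 l2 F3 F1 F2
     = sigmaB l3 l1 l2 F3 F1 F2 / (wB l3 l1 l2 F3 F1 F2 - sigmaB l3 l1 l2 F3 F1 F2)
   /\ 0 < del l3 l1 l2 F3 F1 F2) /\
  (forall R1 R2 R3 : vec3, orthonormal3 R1 R2 R3 ->
   forall Om : vec3, dot Om Om = 1 ->
   0 <= Ihat l1 l2 l3 F1 F2 F3 R1 R2 R3 Om).
Proof.
  intros F1 F2 F3; subst F1 F2 F3.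
  destruct (key l1 l2 l3) as (A1 & B1 & C1 & D1); try lra.
  destruct (key l2 l1 l3) as (A2 & B2 & C2 & D2); try nra.
  destruct (key l3 l1 l2) as (A3 & B3 & C3 & D3); try nra.
  repeat split; try tauto.
  intros R1 R2 R3 _ Om _. unfold Ihat.
  assert (0 < / (2*PI)) by (apply Rinv_0_lt_compat; pose proof PI_RGT_0; lra).
  repeat apply Rplus_le_le_0_compat; apply Rmult_le_pos; try apply Fdist_nonneg;
  apply Rmult_le_pos; lra.
Qed.
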